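(* Let $n\ge 2$, $p\ge 1$, and let ${\bf x}=(x_1,\dots,x_n)\in\mathbb{R}^n$. Let $m$ be the median location, i.e. $m=x_{[k]}$ where $k=\lceil n/2\rceil$ (so $n=2k-1$ or $n=2k$) and $x_{[k]}$ denotes the $k$-th largest component of ${\bf x}$. Then $$\Big(\sum_{i=1}^n|m-x_i|^p\Big)^{1/p}\;\le\;2^{1-\frac1p}\,\min_{y\in\mathbb{R}}\Big(\sum_{i=1}^n|y-x_i|^p\Big)^{1/p}.$$
   Context: The social cost of locating a facility at $y\in\mathbb{R}$ for a location profile ${\bf x}=(x_1,\dots,x_n)$ is $sc({\bf x},y)=\big(\sum_{i=1}^n|x_i-y|^p\big)^{1/p}$. The median mechanism maps ${\bf x}$ to $m$ as defined in the claim. *)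

(* Defs.v *)
From Stdlib Require Import Reals Lra Lia.
Open Scope R_scope.

(* Real power a^q for a >= 0 with the convention 0^q = 0 (q > 0);
   Stdlib's Rpower 0 q is 1, so we fix the zero case explicitly. *)
Definition rpow (a q : R) : R := if Req_EM_T a 0 then 0 else Rpower a q.

Fixpoint count_idx (P : R -> bool) (x : nat -> R) (n : nat) : nat :=
  match n with
  | O => O
  | S n' => (count_idx P x n' + (if P (x n') then 1 else 0))%nat
  end.

Definition Rgtb (a b : R) : bool := if Rlt_dec b a then true else false.
Definition Rgeb (a b : R) : bool := if Rle_dec b a then true else false.

(* m is the k-th largest component x_[k] of (x_0,...,x_{n-1}):
   m is a component, fewer than k components exceed m, and at least k
   components are >= m.  (This determines m uniquely.) *)
Definition kth_largest (x : nat -> R) (n k : nat) (m : R) : Prop :=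
  (exists j, (j < n)%nat /\ x j = m) /\
  (count_idx (fun v => Rgtb v m) x n < k)%nat /\
  (k <= count_idx (fun v => Rgeb v m) x n)%nat.

Definition sc (p : R) (x : nat -> R) (n : nat) (y : R) : R :=
  rpow (sum_f_R0 (fun i => rpow (Rabs (x i - y)) p) (n - 1)) (1 / p).

(* Main.v *)
Require Import Defs.
From Stdlib Require Import Reals Lra Lia.
Open Scope R_scope.

Lemma rpow_nonneg a q : 0 <= rpow a q.
Proof. unfold rpow; destruct (Req_EM_T a 0); [lra|]. unfold Rpower; left; apply exp_pos. Qed.

Lemma rpow_pos a q : 0 < a -> rpow a q = Rpower a q.
Proof. intros; unfold rpow; destruct (Req_EM_T a 0); [lra|auto]. Qed.

Lemma rpow0 q : rpow 0 q = 0.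
Proof. unfold rpow; destruct (Req_EM_T 0 0); [auto|lra]. Qed.

Lemma rpow_mono a b q : 0 <= q -> 0 <= a <= b -> rpow a q <= rpow b q.
Proof.
  intros Hq [Ha Hab]. destruct (Req_dec a 0) as [->|Ha0].
  - rewrite rpow0; apply rpow_nonneg.
  - rewrite !rpow_pos by lra. apply Rle_Rpower_l; lra.
Qed.

Lemma rpow_mul a b q : 0 <= a -> 0 <= b -> rpow (a*b) q = rpow a q * rpow b q.
Proof.
  intros Ha Hb. destruct (Req_dec a 0) as [->|Ha0].
  { rewrite Rmult_0_l, !rpow0; lra. }
  destruct (Req_dec b 0) as [->|Hb0].
  { rewrite Rmult_0_r, !rpow0; lra. }
  rewrite !rpow_pos by (try apply Rmult_lt_0_compat; lra).
  rewrite Rpower_mult_distr by lra. auto.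
Qed.

Lemma div_nn a b : 0 <= a -> 0 < b -> 0 <= a / b.
Proof. intros; unfold Rdiv; apply Rmult_le_pos; [lra|left; apply Rinv_0_lt_compat; lra]. Qed.

Lemma bern r p : 1 <= p -> 0 <= r -> 1 + p * (r - 1) <= rpow r p.
Proof.
  intros Hp Hr. destruct (Req_dec r 0) as [->|Hr0].
  { rewrite rpow0; nra. }
  rewrite rpow_pos by lra.
  assert (Hl : 1 - / r <= ln r).
  { pose proof (exp_ineq1_le (ln (/ r))). rewrite exp_ln in H by (apply Rinv_0_lt_compat; lra).
    rewrite ln_Rinv in H by lra. lra. }
  assert (H1 : 1 + (p - 1) * ln r <= Rpower r (p - 1)).
  { unfold Rpower. apply exp_ineq1_le. }
  replace (Rpower r p) with (r * Rpower r (p - 1)).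
  2:{ replace p with (1 + (p - 1)) at 2 by ring. rewrite Rpower_plus, Rpower_1 by lra. auto. }
  assert (H2 : (p - 1) * (1 - / r) <= (p - 1) * ln r) by (apply Rmult_le_compat_l; lra).
  assert (H3 : r * (1 + (p - 1) * (1 - / r)) <= r * Rpower r (p - 1)) by (apply Rmult_le_compat_l; lra).
  replace (r * (1 + (p - 1) * (1 - / r))) with (1 + p * (r - 1)) in H3 by (field; lra).
  lra.
Qed.

Lemma Rpower1x x : Rpower 1 x = 1.
Proof. unfold Rpower; rewrite ln_1, Rmult_0_r, exp_0; auto. Qed.

Lemma rpow_le_self r p : 1 <= p -> 0 <= r <= 1 -> rpow r p <= r.
Proof.
  intros Hp Hr. destruct (Req_dec r 0) as [->|Hr0].
  { rewrite rpow0; lra. }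
  rewrite rpow_pos by lra.
  replace (Rpower r p) with (r * Rpower r (p - 1)).
  2:{ replace p with (1 + (p - 1)) at 2 by ring. rewrite Rpower_plus, Rpower_1 by lra. auto. }
  assert (Rpower r (p - 1) <= Rpower 1 (p-1)) by (apply Rle_Rpower_l; lra).
  rewrite Rpower1x in H. assert (0 < r) by lra. nra.
Qed.

Lemma superadd s t p : 1 <= p -> 0 <= s -> 0 <= t -> rpow s p + rpow t p <= rpow (s + t) p.
Proof.
  intros Hp Hs Ht. destruct (Req_dec (s + t) 0) as [H0|H0].
  { assert (s = 0) by lra; assert (t = 0) by lra; subst. rewrite Rplus_0_r, !rpow0; lra. }
  set (S := s + t).
  assert (HS : 0 < S) by (unfold S; lra).
  replace s with (S * (s / S)) at 1 by (field; lra).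
  replace t with (S * (t / S)) at 1 by (field; lra).
  rewrite !rpow_mul by (try apply div_nn; lra).
  assert (A1 : rpow (s / S) p <= s / S).
  { apply rpow_le_self; auto. split. apply div_nn; lra.
    apply Rmult_le_reg_r with S; auto. unfold Rdiv; rewrite Rmult_assoc, Rinv_l; unfold S; lra. }
  assert (A2 : rpow (t / S) p <= t / S).
  { apply rpow_le_self; auto. split. apply div_nn; lra.
    apply Rmult_le_reg_r with S; auto. unfold Rdiv; rewrite Rmult_assoc, Rinv_l; unfold S; lra. }
  assert (E : s / S + t / S = 1) by (unfold S; field; lra).
  pose proof (rpow_nonneg S p). nra.
Qed.

Lemma convex2 s t p : 1 <= p -> 0 <= s -> 0 <= t ->
  rpow (s + t) p <= Rpower 2 (p - 1) * (rpow s p + rpow t p).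
Proof.
  intros Hp Hs Ht. destruct (Req_dec (s + t) 0) as [H0|H0].
  { assert (s = 0) by lra; assert (t = 0) by lra; subst. rewrite Rplus_0_r, !rpow0; lra. }
  set (M := (s + t) / 2).
  assert (HM : 0 < M) by (unfold M; lra).
  replace s with (M * (s / M)) at 2 by (field; lra).
  replace t with (M * (t / M)) at 2 by (field; lra).
  rewrite !rpow_mul by (try apply div_nn; lra).
  pose proof (bern (s / M) p Hp ltac:(apply div_nn; lra)).
  pose proof (bern (t / M) p Hp ltac:(apply div_nn; lra)).
  assert (E : s / M + t / M = 2) by (unfold M; field; lra).
  replace (s + t) with (2 * M) by (unfold M; field).
  rewrite rpow_mul by lra. rewrite (rpow_pos 2) by lra.
  assert (E2 : Rpower 2 p = 2 * Rpower 2 (p - 1)).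
  { replace p with (1 + (p - 1)) at 1 by ring. rewrite Rpower_plus, Rpower_1 by lra. auto. }
  rewrite E2.
  assert (0 < Rpower 2 (p - 1)) by (unfold Rpower; apply exp_pos).
  pose proof (rpow_nonneg M p).
  assert (HH : 2 <= rpow (s / M) p + rpow (t / M) p).
  { assert (1 + p * (s / M - 1) + (1 + p * (t / M - 1)) = 2 + p * (s / M + t / M - 2)) by ring.
    rewrite E in H4. lra. }
  assert (rpow M p * 2 <= rpow M p * (rpow (s / M) p + rpow (t / M) p)) by (apply Rmult_le_compat_l; lra).
  assert (Rpower 2 (p-1) * (rpow M p * 2) <= Rpower 2 (p-1) * (rpow M p * (rpow (s / M) p + rpow (t / M) p))) by (apply Rmult_le_compat_l; lra).
  replace (2 * Rpower 2 (p - 1) * rpow M p) with (Rpower 2 (p-1) * (rpow M p * 2)) by ring.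
  eapply Rle_trans; [eassumption|right; ring].
Qed.

Lemma K_ge1 p : 1 <= p -> 1 <= Rpower 2 (p - 1).
Proof. intros. pose proof (Rle_Rpower 2 0 (p - 1) ltac:(lra) ltac:(lra)). rewrite Rpower_O in H0 by lra. exact H0. Qed.

Lemma pt1 a u d p : 1 <= p -> 0 <= a -> 0 <= u -> 0 <= d -> a <= u + d ->
  rpow a p - Rpower 2 (p-1) * rpow u p <= Rpower 2 (p-1) * rpow d p.
Proof.
  intros. pose proof (rpow_mono a (u + d) p ltac:(lra) ltac:(lra)).
  pose proof (convex2 u d p H H1 H2). lra.
Qed.

Lemma pt2 b d p : 1 <= p -> 0 <= b -> 0 <= d ->
  rpow b p - Rpower 2 (p-1) * rpow (b + d) p <= - (Rpower 2 (p-1) * rpow d p).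
Proof.
  intros. pose proof (superadd b d p H H0 H1). pose proof (K_ge1 p H).
  pose proof (rpow_nonneg b p). pose proof (rpow_nonneg d p). nra.
Qed.

Fixpoint sm (c : nat -> R) (n : nat) : R :=
  match n with O => 0 | S n' => sm c n' + c n' end.

Lemma sm_sum c n : sum_f_R0 c n = sm c (S n).
Proof. induction n; simpl in *; [ring| rewrite IHn; ring]. Qed.

Lemma sm_lin f g K n : sm (fun i => f i - K * g i) n = sm f n - K * sm g n.
Proof. induction n; simpl; [ring| rewrite IHn; ring]. Qed.

Lemma sum_bound (P : R -> bool) x c D n : 0 <= D ->
  (forall i, (i < n)%nat -> c i <= if P (x i) then D else - D) ->
  sm c n <= D * (2 * INR (count_idx P x n) - INR n).
Proof.
  intros HD. induction n; intros H; cbn [sm count_idx].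
  - simpl; lra.
  - assert (IH := IHn (fun i Hi => H i ltac:(lia))).
    specialize (H n ltac:(lia)).
    rewrite plus_INR, S_INR.
    destruct (P (x n)); simpl in *; lra.
Qed.

Lemma count_compl (P : R -> bool) x n :
  (count_idx (fun v => negb (P v)) x n + count_idx P x n = n)%nat.
Proof. induction n; simpl; [auto|destruct (P (x n)); simpl; lia]. Qed.

Theorem mainTheorem3 (n : nat) (p : R) (x : nat -> R) (m : R) :
  (2 <= n)%nat -> 1 <= p ->
  kth_largest x n ((n + 1) / 2)%nat m ->
  forall y : R, sc p x n m <= Rpower 2 (1 - 1 / p) * sc p x n y.
Proof.
  intros Hn Hp [_ [Hgt Hge]] y.
  set (q := ((n + 1) / 2)%nat) in *.
  assert (Hq1 : (2 * q <= n + 1)%nat) by (apply Nat.Div0.mul_div_le; lia).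
  assert (Hq2 : (n <= 2 * q)%nat).
  { pose proof (Nat.div_mod_eq (n + 1) 2). pose proof (Nat.mod_upper_bound (n+1) 2 ltac:(lia)).
    fold q in H. lia. }
  set (K := Rpower 2 (p - 1)).
  assert (HK : 1 <= K) by (apply K_ge1; auto).
  set (c := fun i => rpow (Rabs (x i - m)) p - K * rpow (Rabs (x i - y)) p).
  assert (Hsum : sm c n <= 0).
  { destruct (Rle_lt_dec m y) as [Hmy|Hmy].
    - set (D := K * rpow (y - m) p).
      assert (HD : 0 <= D) by (pose proof (rpow_nonneg (y - m) p); unfold D; nra).
      eapply Rle_trans. apply (sum_bound (fun v => Rgtb v m) x c D n HD).
      + intros i Hi. unfold c, Rgtb. destruct (Rlt_dec m (x i)).
        * apply pt1; auto; try apply Rabs_pos; try lra.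
          rewrite Rabs_right by lra. pose proof (Rle_abs (x i - y)). lra.
        * rewrite (Rabs_left1 (x i - m)) by lra. rewrite (Rabs_left1 (x i - y)) by lra.
          replace (- (x i - y)) with (- (x i - m) + (y - m)) by ring.
          apply pt2; lra.
      + assert (2 * count_idx (fun v => Rgtb v m) x n <= n)%nat by lia.
        apply le_INR in H. rewrite mult_INR in H. simpl in H. nra.
    - set (D := K * rpow (m - y) p).
      assert (HD : 0 <= D) by (pose proof (rpow_nonneg (m - y) p); unfold D; nra).
      eapply Rle_trans. apply (sum_bound (fun v => negb (Rgeb v m)) x c D n HD).
      + intros i Hi. unfold c, Rgeb. destruct (Rle_dec m (x i)); simpl.
        * rewrite (Rabs_right (x i - m)) by lra. rewrite (Rabs_right (x i - y)) by lra.
          replace (x i - y) with ((x i - m) + (m - y)) by ring.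
          apply pt2; lra.
        * apply pt1; auto; try apply Rabs_pos; try lra.
          rewrite Rabs_left by lra. pose proof (Rle_abs (- (x i - y))). rewrite Rabs_Ropp in H. lra.
      + pose proof (count_compl (fun v => Rgeb v m) x n).
        assert (2 * count_idx (fun v => negb (Rgeb v m)) x n <= n)%nat by lia.
        apply le_INR in H0. rewrite mult_INR in H0. simpl in H0. nra. }
  unfold c in Hsum. rewrite sm_lin in Hsum.
  unfold sc. rewrite !sm_sum. replace (S (n - 1)) with n by lia.
  set (Sm := sm (fun i => rpow (Rabs (x i - m)) p) n) in *.
  set (Sy := sm (fun i => rpow (Rabs (x i - y)) p) n) in *.
  assert (HSm : 0 <= Sm).
  { unfold Sm; clear; induction n; simpl; [lra|pose proof (rpow_nonneg (Rabs (x n - m)) p); lra]. }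
  assert (HSy : 0 <= Sy).
  { unfold Sy; clear; induction n; simpl; [lra|pose proof (rpow_nonneg (Rabs (x n - y)) p); lra]. }
  assert (Hpp : 0 < 1 / p) by (unfold Rdiv; rewrite Rmult_1_l; apply Rinv_0_lt_compat; lra).
  eapply Rle_trans. apply (rpow_mono Sm (K * Sy)); lra.
  rewrite rpow_mul by lra.
  unfold K at 1. rewrite rpow_pos by (unfold Rpower; apply exp_pos).
  rewrite Rpower_mult. right. f_equal. f_equal. field. lra.
Qed.
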